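(* Let $n\in\mathbb{N}_0$, $k\in\mathbb{N}$, $x\in\mathbb{R}$ and $\lambda\in\mathbb{C}\setminus\{0\}$. Then $$E_{n}^{\ast(-k)}(x;\lambda)=\frac{k!\,2^{n-k}}{\lambda^{k}}\,y_{3}\!\left(n,k;\lambda^{2};\frac{x+k}{2k},\frac{x-k}{2k}\right).$$
   Context: For $k\in\mathbb{N}_0$ and $\lambda\ne0$, the second kind Apostol type Euler polynomials of order $-k$ are defined by $$\left(\frac{\lambda e^{t}+\lambda^{-1}e^{-t}}{2}\right)^{k}e^{tx}=\sum_{n=0}^{\infty}E_{n}^{\ast(-k)}(x;\lambda)\frac{t^{n}}{n!}.$$ For $a,b\in\mathbb{R}$, $\mu\in\mathbb{C}$, $k\in\mathbb{N}_0$, the numbers $y_3(n,k;\mu;a,b)$ are defined by $\frac{e^{bkt}}{k!}(\mu e^{(a-b)t}+1)^{k}=\sum_{n\ge0}y_{3}(n,k;\mu;a,b)\frac{t^{n}}{n!}$. *)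

(* Defs.v *)
From HB Require Import structures.
From mathcomp Require Import all_boot all_order all_algebra.
From mathcomp Require Import complex.
From mathcomp Require Import reals.
Set Implicit Arguments. Unset Strict Implicit. Unset Printing Implicit Defensive.
Import Order.TTheory GRing.Theory Num.Theory.
Local Open Scope ring_scope.

(* Formal power series are represented by truncations: the polynomial
   [expS a N] is the truncation at degree N of the power series e^{a t}
   = sum_i a^i t^i / i!.  The coefficient of t^n (n <= N) of a product of
   such series is the coefficient of t^n of the product of truncations. *)
Definition expS (F : fieldType) (a : F) (N : nat) : {poly F} :=
  \poly_(i < N.+1) (a ^+ i / (i`!)%:R).

Definition Estar (F : fieldType) (n k : nat) (x lam : F) : F :=
  (n`!)%:R *
  ((2^-1 *: (lam *: expS 1 n + lam^-1 *: expS (-1) n)) ^+ k * expS x n)`_n.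

Definition y3 (F : fieldType) (n k : nat) (mu a b : F) : F :=
  (n`!)%:R *
  (((k`!)%:R)^-1 *: expS (b * k%:R) n * (mu *: expS (a - b) n + 1) ^+ k)`_n.

(* Main.v *)
Require Import Defs.
From HB Require Import structures.
From mathcomp Require Import all_boot all_order all_algebra.
From mathcomp Require Import complex.
From mathcomp Require Import reals ring.
Import Order.TTheory GRing.Theory Num.Theory.
Local Open Scope ring_scope.
Set Implicit Arguments.
Section S.
Variable F : fieldType.
Variable N : nat.
Definition eqt (p q : {poly F}) := forall i, (i <= N)%N -> p`_i = q`_i.
Definition dl (c : F) (p q : {poly F}) := forall i, (i <= N)%N -> p`_i = c ^+ i * q`_i.

Lemma eqt_refl p : eqt p p. Proof. by []. Qed.
Lemma eqt_sym p q : eqt p q -> eqt q p. Proof. by move=> h i hi; rewrite h. Qed.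
Lemma eqt_trans p q r : eqt p q -> eqt q r -> eqt p r.
Proof. by move=> h1 h2 i hi; rewrite h1 // h2. Qed.
Lemma eqtD p q p' q' : eqt p p' -> eqt q q' -> eqt (p + q) (p' + q').
Proof. by move=> h1 h2 i hi; rewrite !coefD h1 // h2. Qed.
Lemma eqtZ a p q : eqt p q -> eqt (a *: p) (a *: q).
Proof. by move=> h i hi; rewrite !coefZ h. Qed.
Lemma eqtM p q p' q' : eqt p p' -> eqt q q' -> eqt (p * q) (p' * q').
Proof.
move=> h1 h2 i hi; rewrite !coefM; apply: eq_bigr => j _.
have hj : (j <= N)%N by apply: leq_trans hi; rewrite -ltnS.
by rewrite h1 // h2 // (leq_trans (leq_subr _ _) hi).
Qed.
Lemma eqtX p q m : eqt p q -> eqt (p ^+ m) (q ^+ m).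
Proof. move=> h; elim: m => [|m ih]; first by rewrite !expr0.
by rewrite !exprS; apply: eqtM. Qed.

Lemma dlD c p q p' q' : dl c p p' -> dl c q q' -> dl c (p + q) (p' + q').
Proof. by move=> h1 h2 i hi; rewrite !coefD h1 // h2 // mulrDr. Qed.
Lemma dlZ c a p q : dl c p q -> dl c (a *: p) (a *: q).
Proof. by move=> h i hi; rewrite !coefZ h // mulrCA. Qed.
Lemma dl1 c : dl c 1 1.
Proof. by move=> i hi; rewrite coef1; case: eqP => [->|_]; rewrite ?expr0 ?mul1r ?mulr0. Qed.
Lemma dlM c p q p' q' : dl c p p' -> dl c q q' -> dl c (p * q) (p' * q').
Proof.
move=> h1 h2 i hi; rewrite !coefM mulr_sumr; apply: eq_bigr => [[j /= hji]] _.
have hj : (j <= N)%N by apply: leq_trans hi; rewrite -ltnS.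
rewrite h1 // h2 ?(leq_trans (leq_subr _ _) hi) //.
by rewrite mulrACA -exprD subnKC // -ltnS.
Qed.
Lemma dlX c p q m : dl c p q -> dl c (p ^+ m) (q ^+ m).
Proof. move=> h; elim: m => [|m ih]; first by rewrite !expr0; apply: dl1.
by rewrite !exprS; apply: dlM. Qed.
Lemma dl_expS c a : dl c (expS (c * a) N) (expS a N).
Proof. by move=> i hi; rewrite !coef_poly ltnS hi exprMn mulrA. Qed.

Hypothesis hF : forall m, (m`!)%:R != 0 :> F.

Lemma expS_mul a b : eqt (expS a N * expS b N) (expS (a + b) N).
Proof.
move=> i hi; rewrite coefM coef_poly ltnS hi exprDn mulr_suml.
rewrite -(big_mkord xpredT (fun j => (expS a N)`_j * (expS b N)`_(i - j))).
rewrite -(big_mkord xpredT (fun j => a ^+ (i - j) * b ^+ j *+ 'C(i, j) / (i`!)%:R)).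
rewrite big_nat_rev /=; apply: eq_big_nat => j /andP[_ hj].
rewrite add0n subSS.
have hji : (i - j <= N)%N by apply: leq_trans hi; apply: leq_subr.
have hj' : (j <= i)%N by rewrite -ltnS.
rewrite subKn // !coef_poly !ltnS hji (leq_trans hj' hi).
idtac.
rewrite -(bin_fact hj') !natrM -mulr_natr.
have h1 : ('C(i, j))%:R != 0 :> F.
  have := hF i; rewrite -(bin_fact hj') !natrM; apply: contra => /eqP->; by rewrite mul0r.
have h2 := hF j. have h3 := hF (i - j).
by field; rewrite h1 h2 h3.
Qed.
End S.
Arguments expS_mul {F} N hF a b.
Arguments dl_expS {F} N c a.
Arguments dl1 {F} N c.
Arguments eqt_refl {F} N p.
Lemma expS_pow (F : fieldType) N (hF : forall m, (m`!)%:R != 0 :> F) (a : F) m :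
  eqt N (expS a N ^+ m) (expS (a * m%:R) N).
Proof.
elim: m => [|m ih].
  by rewrite expr0 mulr0 => i hi; rewrite coef1 coef_poly ltnS hi; case: i {hi} => [|i];
   rewrite ?expr0 ?fact0 ?divr1 // expr0n mul0r.
rewrite exprS; refine (eqt_trans (eqtM (eqt_refl N (expS a N)) ih) _).
refine (eqt_trans (expS_mul N hF a (a * m%:R)) _).
by rewrite -{1}[a]mulr1 -mulrDr -natr1 addrC.
Qed.

Lemma Estar_gen (F : fieldType) (hF : forall m, (m`!)%:R != 0 :> F) n k (x lam h : F) :
  lam != 0 -> 2 != 0 :> F -> -1 * k%:R + x = 2 * h ->
  Estar n k x lam = (n`!)%:R * ((2^-1 * lam^-1) ^+ k * 2 ^+ n *
     (expS h n * (lam ^+ 2 *: expS 1 n + 1) ^+ k)`_n).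
Proof.
move=> lam0 two0 hx.
set c := 2^-1 * lam^-1.
set B := (lam ^+ 2 *: expS 1 n + 1).
set Q := expS h n * B ^+ k.
set P := expS (2 * h) n * (lam ^+ 2 *: expS 2 n + 1) ^+ k.
have dPQ : dl n 2 P Q.
  refine (dlM (dl_expS n 2 h) _).
  rewrite /B; refine (dlX _ (dlD _ (dl1 n 2))).
  refine (dlZ _ _); have := dl_expS n (2 : F) 1; by rewrite mulr1.
have eq1 : expS (-1) n * (lam ^+ 2 *: expS 2 n + 1) = lam ^+ 2 *: (expS (-1) n * expS 2 n) + expS (-1) n.
  by rewrite mulrDr mulr1 scalerAr.
have e4 : (-1 + 2 : F) = 1 by rewrite addrC -[2]/(1+1) addrK.
have inner : eqt n (2^-1 *: (lam *: expS 1 n + lam^-1 *: expS (-1) n))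
                   (c *: (expS (-1) n * (lam ^+ 2 *: expS 2 n + 1))).
  rewrite eq1.
  have h1 := eqtZ c (eqtD (eqtZ (lam ^+ 2) (expS_mul n hF (-1) 2)) (eqt_refl n (expS (-1) n))).
  refine (eqt_trans _ (eqt_sym h1)) => i hi.
  rewrite e4 !coefZ !coefD !coefZ /c.
  by field; rewrite lam0 two0.
have step2 : eqt n ((2^-1 *: (lam *: expS 1 n + lam^-1 *: expS (-1) n)) ^+ k * expS x n)
   (c ^+ k *: ((expS (-1) n ^+ k * expS x n) * (lam ^+ 2 *: expS 2 n + 1) ^+ k)).
  refine (eqt_trans (eqtM (eqtX k inner) (eqt_refl n (expS x n))) _).
  rewrite exprZn -scalerAl [(expS _ _ * _) ^+ k]exprMn mulrAC => i hi //.
have step3 : eqt n (expS (-1) n ^+ k * expS x n) (expS (2 * h) n).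
  refine (eqt_trans (eqtM (expS_pow _ n hF (-1) k) (eqt_refl n (expS x n))) _).
  rewrite -hx; exact: expS_mul.
have step4 := eqt_trans step2 (eqtZ (c ^+ k) (eqtM step3 (eqt_refl n ((lam ^+ 2 *: expS 2 n + 1) ^+ k)))).
rewrite /Estar step4 // coefZ dPQ // -/Q.
by rewrite -[c ^+ k * _ * _]mulrA.
Qed.

Lemma y3_gen (F : fieldType) n k (mu a b h : F) :
  a - b = 1 -> b * k%:R = h ->
  y3 n k mu a b = (n`!)%:R * ((k`!)%:R^-1 * (expS h n * (mu *: expS 1 n + 1) ^+ k)`_n).
Proof. by move=> e1 e2; rewrite /y3 e1 e2 -scalerAl coefZ. Qed.


Lemma final_alg (F : fieldType) (n k : nat) (lam q : F) :
  lam != 0 -> 2 != 0 :> F -> (k`!)%:R != 0 :> F ->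
  (n`!)%:R * ((2^-1 * lam^-1) ^+ k * 2 ^+ n * q) =
  (k`!)%:R * (2 : F) ^ (n%:Z - k%:Z) / lam ^+ k * ((n`!)%:R * ((k`!)%:R^-1 * q)).
Proof.
move=> l0 t0 f0.
rewrite expfzDr // -exprnN.
have hl : lam ^+ k != 0 by rewrite expf_neq0.
have ht : (2:F) ^+ k != 0 by rewrite expf_neq0.
rewrite exprMn_comm; last exact: mulrC.
rewrite !exprVn.
rewrite -[(2:F) ^ n]/(2 ^+ n).
by field; rewrite ?hl ?ht ?f0.
Qed.

Local Open Scope complex_scope.

Theorem mainTheorem6 (R : realType) (n k : nat) (x : R) (lam : R[i]) :
  (0 < k)%N -> lam != 0 ->
  Estar n k (x%:C) lam =
    (k`!)%:R * (2 : R[i]) ^ (n%:Z - k%:Z) / lam ^+ k *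
    y3 n k (lam ^+ 2) (((x + k%:R) / (2 * k%:R))%:C) (((x - k%:R) / (2 * k%:R))%:C).
Proof.
move=> k0 lam0.
have hF : forall m, (m`!)%:R != 0 :> R[i].
  by move=> m; rewrite pnatr_eq0 -lt0n fact_gt0.
have kR : (k%:R : R) != 0 by rewrite pnatr_eq0 -lt0n.
have two0 : (2 : R[i]) != 0 by rewrite pnatr_eq0.
set h := ((x - k%:R) / 2)%:C.
have e1 : ((x + k%:R) / (2 * k%:R))%:C - ((x - k%:R) / (2 * k%:R))%:C = 1 :> R[i].
  rewrite -rmorphB -(rmorph1 (real_complex R)); congr (_%:C); by field; rewrite kR.
have e2 : ((x - k%:R) / (2 * k%:R))%:C * k%:R = h :> R[i].
  rewrite -(rmorph_nat (real_complex R)) -rmorphM; congr (_%:C); by field; rewrite kR.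
have e3 : -1 * k%:R + x%:C = 2 * h :> R[i].
  rewrite -(rmorph_nat (real_complex R) k) -(rmorph_nat (real_complex R) 2) /h -!rmorphM.
  rewrite mulN1r -rmorphN -rmorphD; congr (_%:C); by field.
rewrite (@Estar_gen _ hF n k x%:C lam h lam0 two0 e3) (@y3_gen _ n k (lam ^+ 2) _ _ h e1 e2).
exact: (@final_alg _ n k lam _ lam0 two0 (hF k)).
Qed.
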